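(* Let $a,b\in\mathbb F^*$, let $g,h\in\mathcal R$ with $x^n-a=hg$, and set $\hat a=a\,b\,\theta^n(b^{-1})$. Then $gb$ is a right divisor of $x^n-\hat a$ and $$M^\theta_{\hat a}(\overline{gb})=M^\theta_a(\overline g)\,M^\theta_{\hat a}(\overline b).$$ Consequently the codes $\mathfrak v_a(\mathcal R\overline g)$ and $\mathfrak v_{\hat a}(\mathcal R\overline{gb})$ are scale-equivalent, i.e. there are nonzero $d_0,\dots,d_{n-1}\in\mathbb F$ such that $(u_0,\dots,u_{n-1})\mapsto(d_0u_0,\dots,d_{n-1}u_{n-1})$ maps the first code onto the second; in particular the two codes have the same Hamming weight enumerator and the same minimum Hamming distance.
   Context: $\mathbb F$ is a finite field, $\theta\in\mathrm{Aut}(\mathbb F)$, $\mathcal R=\mathbb F[x;\theta]$ the skew polynomial ring (elements $\sum f_ix^i$ with left coefficients, $xb=\theta(b)x$), $n\in\mathbb N$. For $e\in\mathbb F^*$, $\mathcal S_e=\mathcal R/\mathcal R(x^n-e)$, $\overline f$ is the coset of $f$ (in $M^\theta_e(\overline f)$ and $\mathfrak v_e(\cdot)$ taken in $\mathcal S_e$), $\mathcal R\overline f$ the left submodule generated by $\overline f$, and $\mathfrak v_e:\mathcal S_e\to\mathbb F^n$ the inverse of $(c_0,\dots,c_{n-1})\mapsto\overline{\sum_{i=0}^{n-1}c_ix^i}$. $M^\theta_e(\overline f)$ is the $n\times n$ matrix whose row with index $i$ ($0\le i\le n-1$) is $\mathfrak v_e(\overline{x^if})$. *)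

(* Defs.v *)
From HB Require Import structures.
From mathcomp Require Import all_boot all_order all_algebra.
From mathcomp Require Import boolp.
From Stdlib Require Import ClassicalEpsilon.
Set Implicit Arguments. Unset Strict Implicit. Unset Printing Implicit Defensive.
Import GRing.Theory.
Local Open Scope ring_scope.

(* Skew polynomial ring R = F[x; theta].  Elements are represented by their
   (left) coefficient sequences, i.e. by {poly F}; the ring addition is that of
   {poly F}, and the multiplication is the skew product determined by
   x b = theta(b) x :
     (sum_i f_i x^i)(sum_j g_j x^j) = sum_{i,j} f_i theta^i(g_j) x^(i+j). *)
Section Skew.
Variable F : finFieldType.
Variable theta : {rmorphism F -> F}.

Definition skew_mul (f g : {poly F}) : {poly F} :=
  \sum_(i < size f) \sum_(j < size g)
     (f`_i * iter i theta g`_j) *: 'X^(i + j).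

Definition in_lideal (n : nat) (e : F) (p : {poly F}) : Prop :=
  exists q : {poly F}, p = skew_mul q ('X^n - e%:P).

Definition vpoly (n : nat) (c : 'rV[F]_n) : {poly F} :=
  \sum_(i < n) c ord0 i *: 'X^i.

(* v_e(overline f): the (unique) c in F^n with overline(sum c_i x^i) = overline f
   in S_e = R / R(x^n - e), i.e. f - sum c_i x^i in R(x^n - e). *)
Definition vrep (n : nat) (e : F) (f : {poly F}) : 'rV[F]_n :=
  epsilon (inhabits 0) (fun c : 'rV[F]_n => in_lideal n e (f - vpoly c)).

Definition Mtheta (n : nat) (e : F) (f : {poly F}) : 'M[F]_n :=
  \matrix_(i < n, j < n) vrep n e (skew_mul 'X^i f) ord0 j.

Definition skew_code (n : nat) (e : F) (f : {poly F}) : pred 'rV[F]_n :=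
  fun u => `[< exists r : {poly F}, u = vrep n e (skew_mul r f) >].

End Skew.

Definition wH (F : finFieldType) (n : nat) (u : 'rV[F]_n) : nat :=
  #|[set i : 'I_n | u ord0 i != 0]|.

(* minimum Hamming distance between distinct codewords (n if there are no two
   distinct codewords) *)
Definition dmin (F : finFieldType) (n : nat) (C : pred 'rV[F]_n) : nat :=
  \big[minn/n]_(u | C u) \big[minn/n]_(v | C v && (u != v)) wH (u - v).

Definition scalev (F : finFieldType) (n : nat) (d : 'I_n -> F) (u : 'rV[F]_n)
  : 'rV[F]_n := \row_(i < n) (d i * u ord0 i).

Arguments skew_code [F] theta n e f _.

(* Main.v *)
Require Import Defs.
From HB Require Import structures.
From mathcomp Require Import all_boot all_order all_algebra.
From mathcomp Require Import boolp zify ring.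
From Stdlib Require Import ClassicalEpsilon.
Set Implicit Arguments. Unset Strict Implicit. Unset Printing Implicit Defensive.
Import GRing.Theory.
Local Open Scope ring_scope.

Lemma iter_mul (F : finFieldType) (theta : {rmorphism F -> F}) i (x y : F) :
  iter i theta (x * y) = iter i theta x * iter i theta y.
Proof. by elim: i => //= i ->; rewrite rmorphM. Qed.
Lemma iter_add (F : finFieldType) (theta : {rmorphism F -> F}) i (x y : F) :
  iter i theta (x + y) = iter i theta x + iter i theta y.
Proof. by elim: i => //= i ->; rewrite rmorphD. Qed.
Lemma iter_opp (F : finFieldType) (theta : {rmorphism F -> F}) i (x : F) :
  iter i theta (- x) = - iter i theta x.
Proof. by elim: i => //= i ->; rewrite rmorphN. Qed.
Lemma iterz0 (F : finFieldType) (theta : {rmorphism F -> F}) i :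
  iter i theta (0 : F) = 0.
Proof. by elim: i => //= i ->; rewrite rmorph0. Qed.
Lemma iterz1 (F : finFieldType) (theta : {rmorphism F -> F}) i :
  iter i theta (1 : F) = 1.
Proof. by elim: i => //= i ->; rewrite rmorph1. Qed.
Lemma iterzV (F : finFieldType) (theta : {rmorphism F -> F}) i (x : F) :
  iter i theta (x^-1) = (iter i theta x)^-1.
Proof. by elim: i => //= i ->; rewrite fmorphV. Qed.
Lemma iter_eq0 (F : finFieldType) (theta : {rmorphism F -> F}) i (x : F) :
  (iter i theta x == 0) = (x == 0).
Proof. by elim: i => //= i <-; rewrite fmorph_eq0. Qed.

Lemma sum_widen (F : finFieldType) (n m : nat) (G : nat -> F) : (n <= m)%N ->
  (forall i, (n <= i < m)%N -> G i = 0) -> \sum_(i < n) G i = \sum_(i < m) G i.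
Proof.
move=> nm H; rewrite -!(big_mkord xpredT) (big_cat_nat (leq0n n) nm) /=.
by rewrite [X in _ + X]big1_seq ?addr0 // => i /andP[_]; rewrite mem_iota subnKC // => /H.
Qed.

Lemma skew_mulE (F : finFieldType) (theta : {rmorphism F -> F}) (f g : {poly F}) :
  skew_mul theta f g = \sum_(i < size f) f`_i *: ('X^i * \poly_(j < size g) iter i theta g`_j).
Proof.
rewrite /skew_mul; apply: eq_bigr => i _; rewrite poly_def mulr_sumr scaler_sumr.
apply: eq_bigr => j _; by rewrite -scalerA exprD scalerAr.
Qed.

Lemma coef_skew (F : finFieldType) (theta : {rmorphism F -> F}) (f g : {poly F}) k :
  (skew_mul theta f g)`_k = \sum_(i < k.+1) f`_i * iter i theta g`_(k - i).
Proof.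
rewrite skew_mulE coef_sum.
have -> : \sum_(i < size f) (f`_i *: ('X^i * \poly_(j < size g) iter i theta g`_j))`_k
  = \sum_(i < size f) (f`_i * (if (k < i)%N then 0 else iter i theta g`_(k - i))).
  apply: eq_bigr => i _; rewrite coefZ coefXnM coef_poly; case: ltnP => // _.
  by case: ltnP => // /(nth_default 0) ->; rewrite iterz0.
rewrite (@sum_widen _ _ (size f + k.+1) (fun i => f`_i * (if (k < i)%N then 0 else iter i theta g`_(k - i)))) ?leq_addr //; last first.
  by move=> i /andP[/(nth_default 0) -> _]; rewrite mul0r.
rewrite [RHS](eq_bigr (fun i : 'I_k.+1 => f`_i * (if (k < i)%N then 0 else iter i theta g`_(k - i)))); last first.
  by move=> i _; rewrite ltnNge -ltnS ltn_ord.
rewrite [RHS](@sum_widen _ _ (size f + k.+1) (fun i => f`_i * (if (k < i)%N then 0 else iter i theta g`_(k - i)))) ?leq_addl //.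
by move=> i /andP[ki _]; rewrite ki mulr0.
Qed.

Lemma skew_mulDl (F : finFieldType) (theta : {rmorphism F -> F}) (f g h : {poly F}) :
  skew_mul theta (f + g) h = skew_mul theta f h + skew_mul theta g h.
Proof.
by apply/polyP => k; rewrite coefD !coef_skew -big_split; apply: eq_bigr => i _; rewrite coefD mulrDl.
Qed.
Lemma skew_mulBl (F : finFieldType) (theta : {rmorphism F -> F}) (f g h : {poly F}) :
  skew_mul theta (f - g) h = skew_mul theta f h - skew_mul theta g h.
Proof.
by apply/polyP => k; rewrite coefB !coef_skew -sumrB; apply: eq_bigr => i _; rewrite coefB mulrBl.
Qed.
Lemma skew_mulZl (F : finFieldType) (theta : {rmorphism F -> F}) c (f h : {poly F}) :
  skew_mul theta (c *: f) h = c *: skew_mul theta f h.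
Proof.
by apply/polyP => k; rewrite coefZ !coef_skew mulr_sumr; apply: eq_bigr => i _; rewrite coefZ mulrA.
Qed.
Lemma skew_mul0l (F : finFieldType) (theta : {rmorphism F -> F}) (h : {poly F}) :
  skew_mul theta 0 h = 0.
Proof. by apply/polyP => k; rewrite coef0 coef_skew big1 // => i _; rewrite coef0 mul0r. Qed.

Lemma coef_skew_rC (F : finFieldType) (theta : {rmorphism F -> F}) (f : {poly F}) c k :
  (skew_mul theta f c%:P)`_k = f`_k * iter k theta c.
Proof.
rewrite coef_skew big_ord_recr /= subnn coefC eqxx big1 ?add0r // => i _.
by rewrite coefC subn_eq0 leqNgt ltn_ord /= iterz0 mulr0.
Qed.
Lemma skew_mul_lC (F : finFieldType) (theta : {rmorphism F -> F}) c (g : {poly F}) :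
  skew_mul theta c%:P g = c *: g.
Proof.
apply/polyP => k; rewrite coef_skew big_ord_recl /= coefC eqxx subn0 coefZ big1 ?addr0 // => i _.
by rewrite coefC /= mul0r.
Qed.
Lemma assoc_rC (F : finFieldType) (theta : {rmorphism F -> F}) (f g : {poly F}) c :
  skew_mul theta (skew_mul theta f g) c%:P = skew_mul theta f (skew_mul theta g c%:P).
Proof.
apply/polyP => k; rewrite coef_skew_rC !coef_skew mulr_suml; apply: eq_bigr => i _.
rewrite coef_skew_rC iter_mul -iterD subnKC 1?mulrA //.
by rewrite -ltnS.
Qed.
Lemma assoc_mC (F : finFieldType) (theta : {rmorphism F -> F}) (f g : {poly F}) c :
  skew_mul theta f (skew_mul theta c%:P g) = skew_mul theta (skew_mul theta f c%:P) g.
Proof.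
apply/polyP => k; rewrite skew_mul_lC !coef_skew; apply: eq_bigr => i _.
by rewrite coef_skew_rC coefZ iter_mul mulrA.
Qed.
Lemma Xn_b (F : finFieldType) (theta : {rmorphism F -> F}) n (a b : F) : b != 0 ->
  skew_mul theta ('X^n - a%:P) b%:P =
  skew_mul theta (iter n theta b)%:P ('X^n - (a * b * iter n theta b^-1)%:P).
Proof.
move=> b0; apply/polyP => k; rewrite skew_mul_lC coefZ coef_skew_rC !coefB !coefXn !coefC.
rewrite iterzV.
have e : iter n theta b * (a * b * (iter n theta b)^-1) = a * b.
  by rewrite mulrC divfK // iter_eq0.
have [kn|kn] := eqVneq k n; have [k0|k0] := eqVneq k 0%N.
- by rewrite -kn k0 /= mulfK // mulrBl mulrBr mul1r mulr1 mulrC.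
- by rewrite kn subr0 mulr1 mul1r.
- by rewrite k0 /= !sub0r mulrN e mulNr.
- by rewrite subr0 mul0r mulr0.
Qed.

Lemma coef_vpoly (F : finFieldType) n (c : 'rV[F]_n) (i : 'I_n) :
  (vpoly c)`_i = c ord0 i.
Proof.
rewrite /vpoly coef_sum (bigD1 i) //= coefZ coefXn eqxx mulr1 big1 ?addr0 // => j ji.
rewrite coefZ coefXn; case: eqP => [/val_inj ij|]; last by rewrite mulr0.
by rewrite ij eqxx in ji.
Qed.
Lemma coef_vpoly_ge (F : finFieldType) n (c : 'rV[F]_n) k : (n <= k)%N ->
  (vpoly c)`_k = 0.
Proof.
move=> nk; rewrite /vpoly coef_sum big1 // => j _; rewrite coefZ coefXn.
by rewrite gtn_eqF ?mulr0 // (leq_trans (ltn_ord j) nk).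
Qed.
Lemma vpoly_inj (F : finFieldType) n (c1 c2 : 'rV[F]_n) : vpoly c1 = vpoly c2 -> c1 = c2.
Proof. by move=> e; apply/rowP => i; rewrite -!coef_vpoly e. Qed.

Lemma vpoly_scale (F : finFieldType) (theta : {rmorphism F -> F}) n (c : 'rV[F]_n) b :
  skew_mul theta (vpoly c) b%:P = vpoly (scalev (fun i : 'I_n => iter i theta b) c).
Proof.
apply/polyP => k; rewrite coef_skew_rC; case: (ltnP k n) => [kn|nk].
  by rewrite -[k]/(val (Ordinal kn)) !coef_vpoly mxE mulrC.
by rewrite !coef_vpoly_ge // mul0r.
Qed.

Lemma coef_skew_mono (F : finFieldType) (theta : {rmorphism F -> F}) c j (p : {poly F}) k :
  (skew_mul theta (c *: 'X^j) p)`_k = if (j <= k)%N then c * iter j theta p`_(k - j) else 0.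
Proof.
rewrite coef_skew; case: leqP => [jk|kj].
  rewrite (bigD1 (Ordinal (jk : (j < k.+1)%N))) //= coefZ coefXn eqxx mulr1 big1 ?addr0 // => i ij.
  rewrite coefZ coefXn; case: eqP => [ij'|]; last by rewrite mulr0 mul0r.
by move: ij; rewrite -(inj_eq val_inj) /= ij' eqxx.
rewrite big1 // => i _; rewrite coefZ coefXn.
by rewrite ltn_eqF ?mulr0 ?mul0r // (leq_trans _ kj) // ltnS -ltnS ltn_ord.
Qed.

Lemma coef_XnC (F : finFieldType) n (e : F) k :
  ('X^n - e%:P)`_k = (k == n)%:R - (if k == 0%N then e else 0).
Proof. by rewrite coefB coefXn coefC. Qed.

Lemma coef_top (F : finFieldType) (theta : {rmorphism F -> F}) n (e : F) (q : {poly F}) :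
  (0 < n)%N -> q != 0 ->
  (skew_mul theta q ('X^n - e%:P))`_((size q).-1 + n) = lead_coef q.
Proof.
move=> n0 q0; set K := ((size q).-1 + n)%N.
have hs : ((size q).-1 < K.+1)%N by rewrite ltnS leq_addr.
rewrite coef_skew (bigD1 (Ordinal hs)) //= big1 ?addr0.
  by rewrite coef_XnC /K addKn eqxx (gtn_eqF n0) subr0 iterz1 mulr1.
move=> i /= iq; case: (ltnP (size q).-1 i) => [lt|le].
  by rewrite nth_default ?mul0r // (leq_trans (leqSpred _) lt).
have lt : (i < (size q).-1)%N by rewrite ltn_neqAle le andbT; move: iq; rewrite -(inj_eq val_inj).
have h1 : ((K - i)%N == n) = false by apply/eqP; move: lt; rewrite /K; move: (size q).-1 (nat_of_ord i) => s' i' ?; lia.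
have h2 : ((K - i)%N == 0)%N = false by apply/eqP; move: lt; rewrite /K; move: (size q).-1 (nat_of_ord i) => s' i' ?; lia.
by rewrite coef_XnC h1 h2 subr0 iterz0 mulr0.
Qed.

Lemma vpoly_ideal0 (F : finFieldType) (theta : {rmorphism F -> F}) n (e : F) (c : 'rV[F]_n) q :
  (0 < n)%N -> vpoly c = skew_mul theta q ('X^n - e%:P) -> q = 0.
Proof.
move=> n0 E; apply/eqP; apply/negPn/negP => q0.
have := coef_top theta e n0 q0; rewrite -E coef_vpoly_ge ?leq_addl // => /esym/eqP.
by rewrite lead_coef_eq0 (negbTE q0).
Qed.

Lemma rep_exists (F : finFieldType) (theta : {rmorphism F -> F}) n (e : F) (f : {poly F}) :
  (0 < n)%N -> exists c : 'rV[F]_n, in_lideal theta n e (f - vpoly c).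
Proof.
move=> n0; move: {2}(size f) (leqnn (size f)) => m; elim: m f => [|m IH] f szf.
  exists 0; exists 0; rewrite skew_mul0l; move: szf; rewrite size_poly_leq0 => /eqP ->.
  by rewrite /vpoly big1 ?subr0 // => i _; rewrite mxE scale0r.
case: (leqP (size f) n) => [fn|nf].
  exists (\row_(i < n) f`_i); exists 0; rewrite skew_mul0l; apply/polyP => k.
  rewrite coefB coef0; case: (ltnP k n) => [kn|nk].
    by rewrite -[k]/(val (Ordinal kn)) coef_vpoly mxE subrr.
  by rewrite coef_vpoly_ge // subr0 nth_default // (leq_trans fn nk).
set m' := (size f).-1; set j := (m' - n)%N.
have hm' : (n <= m')%N by rewrite /m' -ltnS prednK // (leq_ltn_trans _ nf).
set f' := f - skew_mul theta (lead_coef f *: 'X^j) ('X^n - e%:P).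
have : (size f' <= m)%N.
  apply: (leq_trans _ (_ : m' <= m)%N); last by rewrite /m' -ltnS prednK // (leq_ltn_trans _ nf).
  apply/leq_sizeP => k mk.
  have jk : (j <= k)%N by rewrite /j; lia.
  have kj : ((k - j)%N == n) = (k == m') by apply/eqP/eqP; rewrite /j; lia.
  have kj0 : ((k - j)%N == 0%N) = false by apply/eqP; rewrite /j; lia.
  rewrite coefB coef_skew_mono jk coef_XnC kj kj0 subr0.
  case: eqP => [->|km]; first by rewrite iterz1 mulr1 /lead_coef subrr.
  rewrite iterz0 mulr0 subr0 nth_default //.
  have : (size f <= m'.+1)%N by apply: leqSpred.
  move: km mk; rewrite /m'; move: (size f).-1 => s'; clear; move: (size f) => z; lia.
move=> /IH [c [q Eq]]; exists c; exists (q + lead_coef f *: 'X^j).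
by rewrite skew_mulDl -Eq /f' addrAC subrK.
Qed.

Lemma vrep_spec (F : finFieldType) (theta : {rmorphism F -> F}) n (e : F) (f : {poly F}) :
  (0 < n)%N -> in_lideal theta n e (f - vpoly (vrep theta n e f)).
Proof. move=> n0; exact: (epsilon_spec (inhabits (0 : 'rV[F]_n)) (fun c => in_lideal theta n e (f - vpoly c)) (rep_exists theta e f n0)). Qed.

Lemma vpolyB (F : finFieldType) n (c v : 'rV[F]_n) : vpoly c - vpoly v = vpoly (c - v).
Proof. by rewrite /vpoly -sumrB; apply: eq_bigr => i _; rewrite !mxE scalerBl. Qed.

Lemma vrep_eq (F : finFieldType) (theta : {rmorphism F -> F}) n (e : F) (f : {poly F}) c :
  in_lideal theta n e (f - vpoly c) -> vrep theta n e f = c.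
Proof.
case: n c => [|n] c H; first by apply/rowP => -[].
have [q1 E1] := vrep_spec theta e f (ltn0Sn n); case: H => q2 E2.
have E : vpoly c - vpoly (vrep theta n.+1 e f) = skew_mul theta (q1 - q2) ('X^(n.+1) - e%:P).
  rewrite skew_mulBl -E1 -E2; ring.
have q0 : q1 - q2 = 0 by apply: (vpoly_ideal0 (c := c - vrep theta n.+1 e f) (ltn0Sn n)); rewrite -vpolyB; exact: E.
by move: E; rewrite q0 skew_mul0l => /eqP; rewrite subr_eq0 => /eqP /vpoly_inj ->.
Qed.

Lemma key (F : finFieldType) (theta : {rmorphism F -> F}) n (a b : F) (f : {poly F}) :
  b != 0 ->
  vrep theta n (a * b * iter n theta b^-1) (skew_mul theta f b%:P) =
  scalev (fun i : 'I_n => iter i theta b) (vrep theta n a f).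
Proof.
move=> b0; case: n => [|n]; first by apply/rowP => -[].
apply: vrep_eq; have [q E] := vrep_spec theta a f (ltn0Sn n).
exists (skew_mul theta q (iter n.+1 theta b)%:P).
by rewrite -vpoly_scale -skew_mulBl E assoc_rC Xn_b // assoc_mC.
Qed.

HB.instance Definition _ := SemiGroup.isComLaw.Build nat minn minnA minnC.

Lemma scalevK (F : finFieldType) n (d : 'I_n -> F) (w : 'rV[F]_n) : (forall i, d i != 0) ->
  scalev d (scalev (fun i => (d i)^-1) w) = w.
Proof. by move=> dn; apply/rowP => i; rewrite !mxE mulrA mulfV ?mul1r. Qed.
Lemma scalev_inj (F : finFieldType) n (d : 'I_n -> F) : (forall i, d i != 0) ->
  injective (scalev d).
Proof.
move=> dn u v /rowP E; apply/rowP => i; have := E i; rewrite !mxE => /(mulfI (dn i)) //.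
Qed.
Lemma scalevB (F : finFieldType) n (d : 'I_n -> F) (u v : 'rV[F]_n) :
  scalev d u - scalev d v = scalev d (u - v).
Proof. by apply/rowP => i; rewrite !mxE mulrBr. Qed.
Lemma wH_scalev (F : finFieldType) n (d : 'I_n -> F) (u : 'rV[F]_n) : (forall i, d i != 0) ->
  wH (scalev d u) = wH u.
Proof.
move=> dn; rewrite /wH; apply: eq_card => i; rewrite !inE mxE mulf_eq0 negb_or dn //.
Qed.

Lemma scale_equiv (F : finFieldType) n (d : 'I_n -> F) (C1 C2 : pred 'rV[F]_n) :
  (forall i, d i != 0) -> (forall u, C2 (scalev d u) = C1 u) ->
  (forall k : nat, #|[set u | C1 u & wH u == k]| = #|[set u | C2 u & wH u == k]|)
  /\ dmin C1 = dmin C2.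
Proof.
move=> dn CS; have inj := scalev_inj dn.
have bij : bijective (scalev d).
  by exists (scalev (fun i => (d i)^-1)) => w; [apply: inj; rewrite scalevK | rewrite scalevK].
split.
  move=> k; have -> : [set u | C2 u & wH u == k] = scalev d @: [set u | C1 u & wH u == k].
    apply/setP => w; apply/idP/imsetP.
      rewrite inE => /andP[c2 wk]; exists (scalev (fun i => (d i)^-1) w); last by rewrite scalevK.
      by rewrite inE -CS scalevK // c2 -(wH_scalev _ dn) scalevK.
    by case=> u; rewrite !inE => /andP[c1 wk] ->; rewrite CS c1 wH_scalev.
  by rewrite card_imset.
rewrite /dmin [RHS](reindex (scalev d) (onW_bij _ bij)) /=.
apply: eq_big => [u|u _]; first by rewrite CS.
rewrite [RHS](reindex (scalev d) (onW_bij _ bij)) /=.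
apply: eq_big => [v|v _] /=; first by rewrite CS (inj_eq inj).
by rewrite scalevB wH_scalev.
Qed.

Lemma vrep_Xk (F : finFieldType) (theta : {rmorphism F -> F}) n (e : F) (k : 'I_n) :
  vrep theta n e 'X^k = \row_(l < n) (k == l)%:R.
Proof.
apply: vrep_eq; exists 0; rewrite skew_mul0l; apply/eqP; rewrite subr_eq0; apply/eqP.
apply/polyP => m; rewrite coefXn; case: (ltnP m n) => [mn|nm].
  by rewrite -[m]/(val (Ordinal mn)) coef_vpoly mxE eq_sym.
by rewrite coef_vpoly_ge // gtn_eqF // (leq_trans (ltn_ord k) nm).
Qed.

Theorem theorem5p4 (F : finFieldType) (theta : {rmorphism F -> F}) (n : nat)
  (a b : F) (g h : {poly F}) :
  a != 0 -> b != 0 ->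
  'X^n - a%:P = skew_mul theta h g ->
  let ahat := a * b * iter n theta b^-1 in
  let gb := skew_mul theta g b%:P in
  [/\ exists h' : {poly F}, 'X^n - ahat%:P = skew_mul theta h' gb,
      Mtheta theta n ahat gb = Mtheta theta n a g *m Mtheta theta n ahat b%:P,
      exists d : 'I_n -> F,
        (forall i, d i != 0) /\
        (forall u, skew_code theta n a g u -> skew_code theta n ahat gb (scalev d u)) /\
        (forall w, skew_code theta n ahat gb w ->
                   exists2 u, skew_code theta n a g u & w = scalev d u),
      (forall k : nat,
         #|[set u | skew_code theta n a g u & wH u == k]| =
         #|[set u | skew_code theta n ahat gb u & wH u == k]|)
    & dmin (skew_code theta n a g) = dmin (skew_code theta n ahat gb)].
Proof.
move=> a0 b0 E ahat gb.
set d := fun i : 'I_n => iter i theta b.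
have dn : forall i, d i != 0 by move=> i; rewrite /d iter_eq0.
have fwd : forall u, skew_code theta n a g u -> skew_code theta n ahat gb (scalev d u).
  move=> u /asboolP [r ->]; apply/asboolP; exists r.
  by rewrite /gb -assoc_rC key.
have bwd : forall w, skew_code theta n ahat gb w ->
                   exists2 u, skew_code theta n a g u & w = scalev d u.
  move=> w /asboolP [r ->]; exists (vrep theta n a (skew_mul theta r g)).
    by apply/asboolP; exists r.
  by rewrite /gb -assoc_rC key.
have CS : forall u, skew_code theta n ahat gb (scalev d u) = skew_code theta n a g u.
  move=> u; apply/idP/idP => [/bwd [u' c1 /(scalev_inj dn) ->] //|]; exact: fwd.
have [wt dm] := scale_equiv dn CS.
split => //.
- exists ((iter n theta b)^-1 *: h).
  rewrite skew_mulZl /gb -assoc_rC -E Xn_b // skew_mul_lC scalerA mulVf ?iter_eq0 //.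
  by rewrite scale1r.
- apply/matrixP => i j; rewrite !mxE /gb -assoc_rC key // mxE.
  rewrite (bigD1 j) //= big1 ?addr0; last first.
    move=> k kj; rewrite !mxE key // mxE vrep_Xk mxE (negbTE kj) mulr0 mulr0 //.
  by rewrite !mxE key // mxE vrep_Xk mxE eqxx mulr1 mulrC.
- by exists d.
Qed.
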